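(* Let $0<\varepsilon\leq 1/2$ be a constant and $0<\alpha\le 1$. For a subset $S\subseteq\mathbb{Z}_p$ chosen uniformly at random among the subsets of $\mathbb{Z}_p$ of size $p^{\varepsilon}$, its generic $\alpha$-complexity satisfies $$\mathcal{C}_\alpha(S)>\frac{\alpha|S|}{\ln p}$$ with probability at least $1-1/p$, for all sufficiently large primes $p$.
   Context: $\mathbb{Z}_p$ is the field of residues modulo a prime $p$. For $L\subseteq\mathbb{Z}_p^2$, $I(L)=\{x\in\mathbb{Z}_p\mid \exists (a,b),(a',b')\in L,\ (a,b)\neq(a',b'),\ ax+b=a'x+b'\}$. For $S\subseteq\mathbb{Z}_p$ and $0<\alpha\leq1$, the generic $\alpha$-complexity $\mathcal{C}_\alpha(S)$ is the smallest cardinality of a set $L\subseteq\mathbb{Z}_p^2$ with $|S\cap I(L)|\geq\alpha|S|$. *)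

(* Defs.v *)
From HB Require Import structures.
From mathcomp Require Import all_boot all_order all_algebra.
From mathcomp Require Import all_classical all_reals all_analysis.
Set Implicit Arguments. Unset Strict Implicit. Unset Printing Implicit Defensive.
Import Order.TTheory GRing.Theory Num.Theory.
Local Open Scope ring_scope.

Definition Iset (p : nat) (L : {set 'F_p * 'F_p}) : {set 'F_p} :=
  [set x | [exists l1 in L, exists l2 in L,
             (l1 != l2) && (l1.1 * x + l1.2 == l2.1 * x + l2.2)]].

Definition alpha_ok (R : realType) (p : nat) (alpha : R) (S : {set 'F_p})
  (L : {set 'F_p * 'F_p}) : bool :=
  alpha * (#|S|%:R) <= (#|S :&: Iset L|%:R).

(* generic alpha-complexity: smallest |L| among admissible L
   (the set of admissible L is nonempty, e.g. L = all of Z_p^2). *)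
Definition C_alpha (R : realType) (p : nat) (alpha : R) (S : {set 'F_p}) : nat :=
  \big[minn/#|[set: 'F_p * 'F_p]|]_(L : {set 'F_p * 'F_p} | alpha_ok alpha S L) #|L|.

(* Main.v *)
Require Import Defs.
From HB Require Import structures.
From mathcomp Require Import all_boot all_order all_algebra.
From mathcomp Require Import all_classical all_reals all_analysis.
From mathcomp Require Import zify ring lra.
Import Order.TTheory GRing.Theory Num.Theory.
Local Open Scope ring_scope.

Lemma lin_final (R : realType) (x lc l2 alpha M1 Bx kR jR : R) :
  Bx <= alpha * kR -> alpha * kR < jR + 1 ->
  2 <= M1 -> M1 <= lc -> lc <= x -> 2 * x < kR -> 0 <= l2 ->
  alpha * M1 = 2 * alpha + l2 + 2 -> 0 < alpha ->
  x + 2 * Bx + l2 * kR <= lc * jR.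
Proof.
move=> Bxh jgt M12 cM1 cx k2x l20 aM1 a0.
have t1 : lc * (alpha * kR - 1) <= lc * jR.
  by apply: ler_wpM2l; lra.
have t2 : kR * (alpha * M1) <= kR * (alpha * lc).
  by apply: ler_wpM2l; [lra| apply: ler_wpM2l; lra].
rewrite aM1 in t2.
have e1 : lc * (alpha * kR - 1) = kR * (alpha * lc) - lc by ring.
rewrite e1 in t1.
have e3 : kR * (2 * alpha + l2 + 2) = 2 * (alpha * kR) + l2 * kR + 2 * kR by ring.
rewrite e3 in t2.
lra.
Qed.

Lemma keyl (R : realType) (r x c alpha M1 : R) (B k j : nat) :
  0 < r -> 0 < c -> x = ln r -> 0 < x -> 
  B%:R * x <= alpha * k%:R -> alpha * k%:R < j%:R + 1 ->
  2 <= M1 -> M1 <= ln c -> ln c <= x -> 2 * x < k%:R ->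
  alpha * M1 = 2 * alpha + ln 2 + 2 -> 0 < alpha ->
  r * r ^+ (2 * B) * 2 ^+ k <= c ^+ j.
Proof.
move=> r0 c0 xE x0 Bx jgt M12 cM1 cx k2x aM1 a0.
  have l20 : 0 <= ln (2:R) by apply: ln_ge0; lra.
  have p1 : 0 < r ^+ (2 * B) by apply: exprn_gt0.
  have p2 : 0 < (2:R) ^+ k by apply: exprn_gt0.
  have p3 : 0 < r * r ^+ (2 * B) by apply: mulr_gt0.
  have p4 : 0 < r * r ^+ (2 * B) * 2 ^+ k by apply: mulr_gt0.
  have p5 : 0 < c ^+ j by apply: exprn_gt0.
  have : ln (r * r ^+ (2 * B) * 2 ^+ k) <= ln (c ^+ j).
    rewrite lnM ?posrE // lnM ?posrE // !lnXn //.
    rewrite -[ln r *+ _]mulr_natr -[ln 2 *+ _]mulr_natr -[ln c *+ _]mulr_natr -xE natrM.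
    have e2 : x * (2%:R * B%:R) = 2 * (B%:R * x) by ring.
    rewrite e2.
    have h := @lin_final R _ _ _ _ _ _ _ _ Bx jgt M12 cM1 cx k2x l20 aM1 a0; lra.
  by rewrite ler_ln ?posrE.
Qed.

Lemma aux1 (R : realType) (e x : R) : 0 < e -> 1 <= x -> 8 <= e * e * x ->
  2 * x + 1 <= (1 + e * x / 2) * (1 + e * x / 2).
Proof. move=> *; nra. Qed.

Lemma aux2 (R : realType) (e x : R) : e <= 1 / 2 -> 0 < x -> e * x + e * x <= x.
Proof. move=> *; nra. Qed.

Lemma aux3 (R : realType) (k r : R) : 0 <= k -> 4 <= r -> k * k <= r -> k <= r / 2.
Proof. move=> *; nra. Qed.

Lemma aux4 (R : realType) (a k j : R) : j <= a * k -> a <= 1 -> 0 <= k -> j <= k.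
Proof. move=> *; nra. Qed.

Lemma final_step (R : realType) (r x c : R) (B k j : nat) : 4 <= r -> 0 < x ->
  c = x * x / 2 -> B%:R * B%:R <= r / (x * x) -> k%:R <= r / 2 -> (j <= k)%N ->
  r * r ^+ (2 * B) * 2 ^+ k <= c ^+ j ->
  r * r ^+ (2 * B) * 2 ^+ k * (B%:R * B%:R) ^+ j <= (r - j%:R) ^+ j.
Proof.
move=> r4 x0 cE BB kr2 jk key.
have r0 : 0 < r by lra.
have rxx : 0 <= r / (x * x) by apply: divr_ge0; [lra | apply: mulr_ge0; lra].
have step1 : (B%:R * B%:R) ^+ j <= (r / (x * x)) ^+ j.
  by apply: lerXn2r => //; rewrite nnegrE ?mulr_ge0.
have step2 : (r / 2) ^+ j <= (r - j%:R) ^+ j.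
  have : (j%:R : R) <= k%:R by rewrite ler_nat.
  move=> jk'.
  apply: lerXn2r; rewrite ?nnegrE; lra.
apply: (le_trans _ step2).
have -> : r / 2 = r / (x * x) * c by rewrite cE; field; lra.
rewrite [(r / (x * x) * c) ^+ j]exprMn.
have q0 : 0 <= r * r ^+ (2 * B) * 2 ^+ k.
  apply: mulr_ge0; [apply: mulr_ge0; [lra | apply: exprn_ge0; lra] | apply: exprn_ge0; lra].
have s1 : r * r ^+ (2 * B) * 2 ^+ k * (B%:R * B%:R) ^+ j <=
    r * r ^+ (2 * B) * 2 ^+ k * (r / (x * x)) ^+ j by apply: ler_wpM2l.
apply: (le_trans s1).
rewrite [X in _ <= X]mulrC; apply: ler_wpM2r => //; exact: exprn_ge0.
Qed.

Lemma core_abs (R : realType) (eps alpha M1 r x c : R) (k j B : nat) :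
  0 < eps -> eps <= 1 / 2 -> 0 < alpha -> alpha <= 1 ->
  2 <= M1 -> alpha * M1 = 2 * alpha + ln 2 + 2 ->
  4 <= r -> x = ln r -> 1 <= x -> 2 * expR M1 <= x -> 8 / (eps * eps) <= x ->
  c = x * x / 2 ->
  k%:R <= r `^ eps -> r `^ eps < k.+1%:R ->
  j%:R <= alpha * k%:R -> alpha * k%:R < j.+1%:R ->
  B%:R <= alpha * k%:R / x ->
  [/\ (0 < k)%N, (j <= k)%N, k%:R <= r / 2 &
      r * r ^+ (2 * B) * 2 ^+ k * (B%:R * B%:R) ^+ j <= (r - j%:R) ^+ j].
Proof.
move=> e0 e1 a0 a1 M1ge aM1 r4 xE x1 x2 x3 cE kle kgt jle jgt Ble.
have r0 : 0 < r by lra.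
have rE : r = expR x by rewrite xE lnK // posrE.
have powE : r `^ eps = expR (eps * x).
  by rewrite /powR gt_eqF // xE.
have ex8 : 8 <= eps * eps * x.
  by move: x3; rewrite ler_pdivrMr ?mulr_gt0 // mulrC.
have eexp : 2 * x + 1 <= expR (eps * x).
  have -> : eps * x = 2%:R * (eps * x / 2) by rewrite mulrC mulrA; field.
  rewrite expRM_natl.
  have h := expR_ge1Dx (eps * x / 2).
  have h0 : 0 <= 1 + eps * x / 2 by have := mulr_ge0 (ltW e0) (le_trans ler01 x1); lra.
  apply: le_trans (_ : (1 + eps * x / 2) ^+ 2 <= _); last first.
    by apply: lerXn2r => //; rewrite nnegrE //; apply: le_trans h.
  rewrite expr2; apply: aux1 => //.
rewrite powE in kle kgt.
have k2x : 2 * x < k%:R by lra.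
have k0 : (0 < k)%N by rewrite -(ltr_nat R); lra.
have kk : k%:R * k%:R <= r.
  have kge0 : 0 <= (k%:R : R) by [].
  apply: (le_trans (ler_pM kge0 kge0 kle kle)).
  rewrite -expRD rE ler_expR; apply: aux2 => //; lra.
have kr2 : k%:R <= r / 2 by apply: aux3.
have jk : (j <= k)%N by rewrite -(ler_nat R); exact: (@aux4 _ _ _ _ jle a1 (ler0n _ _)).
split => //.
have x0 : 0 < x by lra.
have Bx : B%:R * x <= alpha * k%:R by rewrite -ler_pdivlMr.
have B0 : 0 <= (B%:R : R) by [].
have Bxk : B%:R * x <= k%:R.
  have : alpha * k%:R <= k%:R by apply: ler_piMl.
  lra.
have BB' : (B%:R * B%:R) * (x * x) <= r.
  have : (B%:R * x) * (B%:R * x) <= k%:R * k%:R :> R.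
    by apply: ler_pM => //; apply: mulr_ge0 => //; lra.
  move=> h; apply: le_trans kk; apply: le_trans h; rewrite le_eqVlt; apply/orP; left; apply/eqP; ring.
have BB : B%:R * B%:R <= r / (x * x) by rewrite ler_pdivlMr ?mulr_gt0.
have c0 : 0 < c by rewrite cE; apply: divr_gt0 => //; apply: mulr_gt0.
have cM1 : M1 <= ln c.
  have -> : M1 = ln (expR M1) by rewrite expRK.
  rewrite ler_ln ?posrE ?expR_gt0 //.
  have : x * 1 <= x * x by apply: ler_wpM2l; lra.
  rewrite cE; lra.
have cx : ln c <= x.
  have -> : x = ln (expR x) by rewrite expRK.
  rewrite ler_ln ?posrE ?expR_gt0 //.
  have := expR_ge1Dxn 1 (ltW x0).
  rewrite cE expr2 /= => h; apply: le_trans h.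
  have -> : (2`!)%:R = 2 :> R by [].
  lra.
have jgt' : alpha * k%:R < j%:R + 1 by rewrite natr1.
have key : r * r ^+ (2 * B) * 2 ^+ k <= c ^+ j.
  apply: (@keyl R r x c alpha M1 B k j).
  - exact: r0.
  - exact: c0.
  - exact: xE.
  - exact: x0.
  - exact: Bx.
  - exact: jgt'.
  - exact: M1ge.
  - exact: cM1.
  - exact: cx.
  - exact: k2x.
  - exact: aM1.
  - exact: a0.
apply: (@final_step R r x c B k j).
- exact: r4.
- exact: x0.
- exact: cE.
- exact: BB.
- exact: kr2.
- exact: jk.
- exact: key.
Qed.

Lemma real_core (R : realType) (eps alpha : R) : 0 < eps <= 1 / 2 -> 0 < alpha <= 1 ->
 exists M : R, forall r : R, 4 <= r -> M <= ln r ->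
  let k := Num.truncn (r `^ eps) in let j := Num.truncn (alpha * k%:R) in
  let B := Num.truncn (alpha * k%:R / ln r) in
  [/\ (0 < k)%N, (j <= k)%N, k%:R <= r / 2 &
      r * r ^+ (2 * B) * 2 ^+ k * (B%:R * B%:R) ^+ j <= (r - j%:R) ^+ j].
Proof.
move=> /andP[e0 e1] /andP[a0 a1].
have ln2 : 0 <= ln (2:R) by apply: ln_ge0; lra.
have M1ge : 2 <= (2 * alpha + ln 2 + 2) / alpha.
  rewrite ler_pdivlMr //; lra.
have aM1 : alpha * ((2 * alpha + ln 2 + 2) / alpha) = 2 * alpha + ln 2 + 2.
  rewrite mulrC -mulrA mulVf ?mulr1 //; lra.
exists (Num.max (Num.max 1 (2 * expR ((2 * alpha + ln 2 + 2) / alpha))) (8 / (eps * eps))).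
move=> r r4 hM /=.
have x1 : 1 <= ln r by move: hM; rewrite !ge_max => /andP[/andP[]].
have x2 : 2 * expR ((2 * alpha + ln 2 + 2) / alpha) <= ln r by move: hM; rewrite !ge_max => /andP[/andP[]].
have x3 : 8 / (eps * eps) <= ln r by move: hM; rewrite !ge_max => /andP[/andP[]].
have r0 : 0 < r by lra.
have /andP[kle kgt] := truncn_itv (ltW (powR_gt0 eps r0)).
have /andP[jle jgt] := truncn_itv (mulr_ge0 (ltW a0) (ler0n R (Num.truncn (r `^ eps)))).
have x0 : 0 < ln r by lra.
have /andP[Ble _] := truncn_itv (divr_ge0 (mulr_ge0 (ltW a0) (ler0n R (Num.truncn (r `^ eps)))) (ltW x0)).
exact: (@core_abs _ _ _ _ _ _ _ _ _ _ e0 e1 a0 a1 M1ge aM1 r4 erefl x1 x2 x3 erefl kle kgt jle jgt Ble).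
Qed.

Lemma bin_swap p k j : (j <= k)%N -> (k <= p)%N ->
  ('C(p - j, k - j) * 'C(p, j) = 'C(p, k) * 'C(k, j))%N.
Proof.
move=> jk kp.
have jp : (j <= p)%N by apply: leq_trans kp.
have h1 := bin_fact (leq_sub2r j kp).
have e : (p - j - (k - j) = p - k)%N by lia.
rewrite e in h1.
have h2 := bin_fact jp.
have h3 := bin_fact kp.
have h4 := bin_fact jk.
have F0 : (0 < j`! * (k - j)`! * (p - k)`!)%N by rewrite !muln_gt0 !fact_gt0.
apply/eqP; rewrite -(eqn_pmul2r F0); apply/eqP.
have -> : ('C(p - j, k - j) * 'C(p, j) * (j`! * (k - j)`! * (p - k)`!) =
   'C(p, j) * (j`! * ('C(p - j, k - j) * ((k - j)`! * (p - k)`!))))%N by ring.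
rewrite h1 h2.
have -> : ('C(p, k) * 'C(k, j) * (j`! * (k - j)`! * (p - k)`!) =
   'C(p, k) * (('C(k, j) * (j`! * (k - j)`!)) * (p - k)`!))%N by ring.
by rewrite h4 h3.
Qed.

Lemma ffact_ub n j : (n ^_ j <= n ^ j)%N.
Proof.
elim: j => [|j IH]; first by rewrite ffactn0 expn0.
by rewrite ffactnSr expnSr leq_mul // leq_subr.
Qed.

Lemma ffact_lb n j : ((n - j) ^ j <= n ^_ j)%N.
Proof.
elim: j => [|j IH]; first by rewrite ffactn0 expn0.
rewrite ffactnSr expnSr leq_mul //.
  apply: leq_trans IH; case: j => [|j]; first by rewrite !expn0.
  by rewrite leq_exp2r // leq_sub2l.
by rewrite leq_sub2l.
Qed.

Lemma bin_le_pow2 k j : ('C(k, j) <= 2 ^ k)%N.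
Proof.
rewrite -[X in 'C(X, _)]card_ord -card_draws.
rewrite -[k in (2 ^ k)%N]card_ord -cardsT -card_powerset.
by apply: subset_leq_card; apply/fintype.subsetP => A _; rewrite powersetE finset.subsetT.
Qed.

Lemma bin_ratio t p j : ('C(t, j) * (p - j) ^ j <= t ^ j * 'C(p, j))%N.
Proof.
have F0 : (0 < j`!)%N by rewrite fact_gt0.
rewrite -(leq_pmul2r F0).
rewrite mulnAC bin_ffact -mulnA bin_ffact.
by apply: leq_mul; [apply: ffact_ub | apply: ffact_lb].
Qed.

Lemma nat_main p k j B : (j <= k)%N -> (k <= p)%N -> (j < p)%N ->
  (p * p ^ (2 * B) * 2 ^ k * (B * B) ^ j <= (p - j) ^ j)%N ->
  (p * ((p * p) ^ B * ('C(B * B, j) * 'C(p - j, k - j))) <= 'C(p, k))%N.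
Proof.
move=> jk kp jp hm.
have F1 : (0 < 'C(p, j) * (p - j) ^ j)%N.
  by rewrite muln_gt0 bin_gt0 expn_gt0 subn_gt0 jp ltnW.
rewrite -(leq_pmul2r F1).
have -> : (p * ((p * p) ^ B * ('C(B * B, j) * 'C(p - j, k - j))) * ('C(p, j) * (p - j) ^ j)
   = p * p ^ (2 * B) * ('C(B * B, j) * (p - j) ^ j) * ('C(p - j, k - j) * 'C(p, j)))%N.
  have e : ((p * p) ^ B = p ^ (2 * B))%N by rewrite expnMn -expnD addnn -mul2n.
  rewrite e; ring.
rewrite bin_swap //.
apply: (@leq_trans (p * p ^ (2 * B) * ((B * B) ^ j * 'C(p, j)) * ('C(p, k) * 2 ^ k))).
  by apply: leq_mul; [apply: leq_mul => //; apply: bin_ratio | apply: leq_mul => //; apply: bin_le_pow2].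
have -> : (p * p ^ (2 * B) * ((B * B) ^ j * 'C(p, j)) * ('C(p, k) * 2 ^ k) =
  (p * p ^ (2 * B) * 2 ^ k * (B * B) ^ j) * ('C(p, k) * 'C(p, j)))%N by ring.
have -> : ('C(p, k) * ('C(p, j) * (p - j) ^ j) = (p - j) ^ j * ('C(p, k) * 'C(p, j)))%N by ring.
by apply: leq_mul.
Qed.

Lemma card_big_setU (I : Type) (T : finType) (r : seq I) (P : {pred I})
    (F : I -> {set T}) :
  (#|\bigcup_(i <- r | P i)  F i| <= \sum_(i <- r | P i) #|F i|)%N.
Proof.
elim/big_ind2 : _ => // [|m A n B Am Bn]; first by rewrite cards0.
by rewrite (leq_trans (leq_card_setU _ _))// leq_add.
Qed.

Lemma card_sup (p : nat) (pp : prime p) (T : {set 'F_p}) k :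
  (#|[set S : {set 'F_p} | (#|S| == k) && (T \subset S)]| <= 'C(p - #|T|, k - #|T|))%N.
Proof.
set D := [set S : {set 'F_p} | _].
have inj : {in D &, injective (fun S => S :\: T)}.
  move=> S1 S2; rewrite !inE => /andP[_ s1] /andP[_ s2] e.
  apply/setP => x; case xT: (x \in T).
    by rewrite (fintype.subsetP s1 _ xT) (fintype.subsetP s2 _ xT).
  by move/setP: e => /(_ x); rewrite !inE xT.
rewrite -(card_in_imset inj).
have hc : #|~: T| = (p - #|T|)%N by have := cardsC T; rewrite (card_Fp pp); lia.
rewrite -hc.
rewrite -cards_draws; apply: subset_leq_card; apply/fintype.subsetP => U /imsetP[S].
rewrite /D inE => /andP[/eqP cS sT] ->.
rewrite inE; apply/andP; split.
  by rewrite finset.setDE subsetIr.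
by rewrite cardsDS // cS.
Qed.

Lemma subset_of_card (T : finType) (A : {set T}) j : (j <= #|A|)%N ->
  exists2 B : {set T}, B \subset A & #|B| = j.
Proof.
move=> jA.
exists [set x | x \in take j (enum A)].
  by apply/fintype.subsetP => x; rewrite inE => /mem_take; rewrite mem_enum.
rewrite cardsE (card_uniqP _); last by apply: take_uniq; apply: enum_uniq.
by rewrite size_takel // -cardE.
Qed.

Definition inter (p : nat) (a b : 'F_p * 'F_p) : 'F_p := (b.2 - a.2) / (a.1 - b.1).
Arguments inter {p}.
Definition Gf (p B : nat) (f : {ffun 'I_B -> 'F_p * 'F_p}) : {set 'F_p} :=
  [set inter (f ij.1) (f ij.2) | ij in [set: 'I_B * 'I_B]].
Arguments Gf {p B}.

Lemma card_Gf p B (f : {ffun 'I_B -> 'F_p * 'F_p}) : (#|Gf f| <= B * B)%N.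
Proof. by rewrite (leq_trans (leq_imset_card _ _)) // cardsT card_prod card_ord. Qed.

Lemma Iset_setT p : Iset [set: 'F_p * 'F_p] = [set: 'F_p].
Proof.
apply/setP => x; rewrite !inE; apply/fintype.existsP; exists (0, 0); rewrite inE /=.
apply/fintype.existsP; exists (1, - x); rewrite inE /=.
by rewrite mul0r add0r mul1r subrr.
Qed.

Lemma C_alpha_att (R : realType) p (alpha : R) (S : {set 'F_p}) : alpha <= 1 ->
  exists L, alpha_ok alpha S L /\ #|L| = C_alpha alpha S.
Proof.
move=> a1; rewrite /C_alpha.
apply: (big_ind (fun n => exists L, alpha_ok alpha S L /\ #|L| = n)).
- exists [set: 'F_p * 'F_p]; split => //.
  by rewrite /alpha_ok Iset_setT finset.setIT ler_piMl.
- move=> x y [L1 [h1 e1]] [L2 [h2 e2]]; case: (leqP x y) => h.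
    by exists L1.
  by exists L2.
- by move=> L hL; exists L.
Qed.

Lemma cover_bad (R : realType) p (alpha : R) (S : {set 'F_p}) (B j : nat) :
  0 < alpha -> alpha <= 1 -> (0 < #|S|)%N -> (C_alpha alpha S <= B)%N ->
  j%:R <= alpha * #|S|%:R ->
  exists f : {ffun 'I_B -> 'F_p * 'F_p}, exists T : {set 'F_p},
    [/\ T \subset Gf f, #|T| = j & T \subset S].
Proof.
move=> a0 a1 S0 CB jle.
have [L [hL eL]] := @C_alpha_att R p alpha S a1.
have : L != finset.set0.
  apply/negP => /eqP L0; move: hL; rewrite /alpha_ok L0.
  have -> : Iset (finset.set0 : {set 'F_p * 'F_p}) = finset.set0.
    apply/finset.setP => x; rewrite !inE; apply/negbTE/negP => /fintype.existsP[l]; by rewrite inE.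
  rewrite finset.setI0 cards0 => h.
  have : 0 < alpha * #|S|%:R by apply: mulr_gt0 => //; rewrite ltr0n.
  lra.
case/set0Pn => l0 l0L.
pose f := [ffun i : 'I_B => nth l0 (enum L) i].
have fsurj : forall l, l \in L -> exists i : 'I_B, f i = l.
  move=> l lL.
  have hi : (index l (enum L) < B)%N.
    by rewrite (leq_trans _ CB) // -eL cardE index_mem mem_enum.
  by exists (Ordinal hi); rewrite ffunE /= nth_index // mem_enum.
have sub : S :&: Iset L \subset Gf f.
  apply/fintype.subsetP => x; rewrite !inE => /andP[_ /fintype.existsP[l1 /andP[l1L /fintype.existsP[l2 /andP[l2L /andP[ne eq]]]]]].
  have [i1 e1] := fsurj _ l1L; have [i2 e2] := fsurj _ l2L.
  apply/imsetP; exists (i1, i2); first by rewrite inE.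
  rewrite /inter /= e1 e2.
  have a12 : l1.1 - l2.1 != 0.
    apply: contra ne => /eqP h.
    have ha : l1.1 = l2.1 by apply/eqP; rewrite -subr_eq0 h.
    move: eq; rewrite ha => /eqP /addrI hb.
    by case: l1 l2 ha hb {l1L l2L e1 e2 h} => [a b] [c d] /= -> ->.
  have -> : l2.2 = l1.1 * x + l1.2 - l2.1 * x by rewrite (eqP eq); ring.
  have -> : l1.1 * x + l1.2 - l2.1 * x - l1.2 = x * (l1.1 - l2.1) by ring.
  by rewrite mulfK.
have jI : (j <= #|S :&: Iset L|)%N.
  by rewrite -(ler_nat R); apply: le_trans hL.
have [T TI cT] := @subset_of_card _ _ _ jI.
exists f, T; split => //.
  exact: fintype.subset_trans TI sub.
by apply: fintype.subset_trans TI _; apply: finset.subsetIl.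
Qed.

Lemma aux5 (R : realType) (a b : R) : a <= b / 2 -> 2%:R * a <= b.
Proof. move=> h; lra. Qed.

Lemma nat_aux k j p : (0 < k)%N -> (j <= k)%N -> (2 * k <= p)%N -> (k <= p)%N /\ (j < p)%N.
Proof. move=> *; split; lia. Qed.

Lemma aux_pos (R : realType) (r : R) : 4 <= r -> 0 < r.
Proof. move=> h; lra. Qed.

Lemma aux6 (R : realType) (r : R) : 4 <= r -> 0 < ln r.
Proof. move=> h; apply: ln_gt0; lra. Qed.

Lemma aux7 (R : realType) (r N G : R) : 0 < r -> r * (N - G) <= N -> (1 - r^-1) * N <= G.
Proof.
move=> r0 h.
have : N - G <= N / r by rewrite ler_pdivlMr // mulrC.
rewrite mulrBl mul1r mulrC; lra.
Qed.

Theorem theorem3 (R : realType) (eps alpha : R) :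
  0 < eps <= 1 / 2 -> 0 < alpha <= 1 ->
  exists P0 : nat, forall p : nat, prime p -> (P0 <= p)%N ->
    (1 - (p%:R : R)^-1) *
      (#|[set S : {set 'F_p} | #|S| == Num.truncn ((p%:R : R) `^ eps)]|%:R)
    <=
    (#|[set S : {set 'F_p} | (#|S| == Num.truncn ((p%:R : R) `^ eps))
          && (alpha * (#|S|%:R) / ln (p%:R : R) < (C_alpha alpha S)%:R)]|%:R).
Proof.
move=> he ha.
have [M hM] := @real_core R eps alpha he ha.
have /andP[a0 a1] := ha.
exists (maxn 4 (Num.truncn (expR M)).+1) => p pp.
rewrite geq_max => /andP[p4 pM].
set r := (p%:R : R).
have r4 : 4 <= r by rewrite /r (ler_nat R 4 p).
have r0 : 0 < r := @aux_pos R r r4.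
have lnr : M <= ln r.
  have h1 : expR M <= r.
    apply: ltW; apply: lt_le_trans (truncnS_gt (expR M)) _.
    by rewrite /r ler_nat.
  have -> : M = ln (expR M) by rewrite expRK.
  by rewrite ler_ln ?posrE ?expR_gt0.
have := hM r r4 lnr.
set k := Num.truncn (r `^ eps).
set j := Num.truncn (alpha * k%:R).
set B := Num.truncn (alpha * k%:R / ln r).
move=> [k0 jk kr2 mainR].
have kp2 : (2 * k <= p)%N.
  by rewrite -(ler_nat R) natrM; apply: aux5.
have [kp jp] := @nat_aux k j p k0 jk kp2.
have mainN : (p * p ^ (2 * B) * 2 ^ k * (B * B) ^ j <= (p - j) ^ j)%N.
  rewrite -(ler_nat R) !natrM !natrX natrB ?natrM; last by apply: ltnW.
  exact: mainR.
have cnt := @nat_main p k j B jk kp jp mainN.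
set Nset := [set S : {set 'F_p} | #|S| == k].
set Good := [set S : {set 'F_p} | (#|S| == k) && (alpha * (#|S|%:R) / ln r < (C_alpha alpha S)%:R)].
have cN : #|Nset| = 'C(p, k) by rewrite card_draws (card_Fp pp).
have GN : Good \subset Nset.
  by apply/fintype.subsetP => S; rewrite !inE => /andP[].
have x0 : 0 < ln r := @aux6 R r r4.
have bad : (#|Nset :\: Good| <= (p * p) ^ B * ('C(B * B, j) * 'C(p - j, k - j)))%N.
  pose Tset (f : {ffun 'I_B -> 'F_p * 'F_p}) :=
    [set T : {set 'F_p} | T \subset Gf f & #|T| == j].
  have sub : Nset :\: Good \subset
      \bigcup_(f : {ffun 'I_B -> 'F_p * 'F_p})
        \bigcup_(T in Tset f) [set S : {set 'F_p} | (#|S| == k) && (T \subset S)].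
    apply/fintype.subsetP => S; rewrite !inE => /andP[hG /eqP cS].
    rewrite cS eqxx /= -leNgt in hG.
    have CB : (C_alpha alpha S <= B)%N.
      rewrite /B truncn_ge_nat //.
      by apply: divr_ge0; [apply: mulr_ge0; [exact: ltW a0 | exact: ler0n] | exact: ltW x0].
    have jle : j%:R <= alpha * #|S|%:R.
      by rewrite cS /j truncn_le; apply: mulr_ge0; [exact: ltW a0 | exact: ler0n].
    have S0 : (0 < #|S|)%N by rewrite cS.
    have [f [T [Tf cT TS]]] := @cover_bad R p alpha S B j a0 a1 S0 CB jle.
    apply/bigcupP; exists f => //.
    apply/bigcupP; exists T.
      by rewrite /Tset inE Tf cT eqxx.
    by rewrite inE cS eqxx TS.
  apply: (leq_trans (subset_leq_card sub)).
  apply: (leq_trans (@card_big_setU _ _ _ _ _)).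
  apply: (@leq_trans (\sum_(f : {ffun 'I_B -> 'F_p * 'F_p}) ('C(B * B, j) * 'C(p - j, k - j)))).
    apply: leq_sum => f _.
    apply: (leq_trans (@card_big_setU _ _ _ _ _)).
    apply: (@leq_trans (\sum_(T in Tset f) 'C(p - j, k - j))).
      apply: leq_sum => T; rewrite inE => /andP[_ /eqP <-].
      exact: (@card_sup p pp T k).
    rewrite sum_nat_const cards_draws.
    by apply: leq_mul => //; apply: leq_bin2l; apply: card_Gf.
  by rewrite sum_nat_const card_ffun card_prod (card_Fp pp) card_ord.
have hB : (p * #|Nset :\: Good| <= 'C(p, k))%N.
  by apply: leq_trans cnt; rewrite leq_mul2l bad orbT.
rewrite cardsDS // in hB.
have GNc : (#|Good| <= #|Nset|)%N by apply: subset_leq_card.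
rewrite -/Good -/Nset.
have hR : r * (#|Nset|%:R - #|Good|%:R) <= #|Nset|%:R.
  by rewrite -natrB // /r -natrM ler_nat; apply: (leq_trans hB); rewrite cN.
exact: (@aux7 R _ _ _ r0 hR).
Qed.
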